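(* The Minimax SCC $M$ coincides with the Copeland SCC $Cop$ (as functions on $\mathcal P$) if and only if $n=2$ or $(h,n)=(3,3)$.
   Context: Let $n,h\ge2$, $N=\{1,\dots,n\}$, $H=\{1,\dots,h\}$; $\mathcal P$ is the set of $h$-tuples $p$ of linear orders on $N$; $x>_{p_i}y$ means $x\neq y$ and $p_i$ ranks $x$ above $y$. Let $\mu_0=\lceil(h+1)/2\rceil$ and $x>^p_{\mu_0}y$ mean $|\{i: x>_{p_i}y\}|\ge\mu_0$. $M(p)=\mathrm{argmin}_{x\in N}\max_{y\neq x}|\{i: y>_{p_i}x\}|$ and $Cop(p)=\mathrm{argmax}_{x\in N}\big(|\{y: x>^p_{\mu_0}y\}|-|\{y: y>^p_{\mu_0}x\}|\big)$. *)

(* Defs.v *)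
From mathcomp Require Import all_boot all_order all_algebra all_fingroup.
Set Implicit Arguments. Unset Strict Implicit. Unset Printing Implicit Defensive.
Import GRing.Theory Num.Theory.

(* A linear order on N = 'I_n is encoded by its rank permutation
   r : {perm 'I_n} (r x = position of x, 0 = top);
   x is ranked strictly above y iff r x < r y.  This is a bijection
   between linear orders on N and {perm 'I_n}. *)
Definition above (n : nat) (r : {perm 'I_n}) (x y : 'I_n) : bool := r x < r y.

Definition profile (n h : nat) := 'I_h -> {perm 'I_n}.

Definition nvotes (n h : nat) (p : profile n h) (x y : 'I_n) : nat :=
  #|[set i : 'I_h | above (p i) x y]|.

(* mu0 = ceil((h+1)/2) *)
Definition mu0 (h : nat) : nat := (h.+2)./2.

Definition maj (n h : nat) (p : profile n h) (x y : 'I_n) : bool :=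
  mu0 h <= nvotes p x y.

Definition minimax_score (n h : nat) (p : profile n h) (x : 'I_n) : nat :=
  \max_(y : 'I_n | y != x) nvotes p y x.

Definition Minimax (n h : nat) (p : profile n h) : {set 'I_n} :=
  [set x | [forall z, minimax_score p x <= minimax_score p z]].

Definition copeland_score (n h : nat) (p : profile n h) (x : 'I_n) : int :=
  (#|[set y | maj p x y]|%:Z - #|[set y | maj p y x]|%:Z)%R.

Definition Copeland (n h : nat) (p : profile n h) : {set 'I_n} :=
  [set x | [forall z, (copeland_score p z <= copeland_score p x)%R]].

(* Main.v *)
Require Import Defs.
From mathcomp Require Import all_boot all_order all_algebra all_fingroup.
From mathcomp Require Import zify.
Set Implicit Arguments. Unset Strict Implicit. Unset Printing Implicit Defensive.
Lemma card_val n (Q : pred nat) : #|[set y : 'I_n | Q (val y)]| = count Q (iota 0 n).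
Proof.
rewrite cardsE cardE -val_enum_ord count_map.
rewrite /enum_mem size_filter -enumT.
by rewrite (@eq_filter _ _ predT) ?filter_predT //.
Qed.

Definition aboveN (K t x y : nat) : bool :=
  if x < K then (if y < K then (x + t) %% K < (y + t) %% K else true)
  else (if y < K then false else x < y).

Definition rotf n K t (x : 'I_n) : 'I_n :=
  if (K <= n) && (x < K) then insubd x ((x + t) %% K) else x.

Lemma val_rotf n K t (x : 'I_n) :
  val (rotf K t x) = if (K <= n) && (x < K) then (x + t) %% K else x.
Proof.
rewrite /rotf; case: ifP => // /andP[hK hx].
rewrite val_insubd; case: ifP => //.
have : (x + t) %% K < K by rewrite ltn_mod; lia.
move=> h1 h2. exfalso. move/negbT: h2. rewrite -leqNgt. lia.
Qed.

Lemma rotf_inj n K t : injective (@rotf n K t).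
Proof.
move=> x y /(congr1 val); rewrite !val_rotf => e; apply: val_inj => /=.
case hK: (K <= n) e => /=; last by [].
have hm : forall z, z < K -> (z + t) %% K < K by move=> z hz; rewrite ltn_mod; lia.
case: (ltnP x K) => hx; case: (ltnP y K) => hy => e.
- have /eqP := e. rewrite eqn_modDr (modn_small hx) (modn_small hy). by move/eqP.
- have := hm _ hx. lia.
- have := hm _ hy. lia.
- by [].
Qed.

Definition rot n K t : {perm 'I_n} := perm (@rotf_inj n K t).

Lemma above_rot n K t (x y : 'I_n) : K <= n ->
  above (@rot n K t) x y = aboveN K t x y.
Proof.
move=> hK; rewrite /above /rot !permE /= !val_rotf hK /= /aboveN.
have hm : forall z, z < K -> (z + t) %% K < K by move=> z hz; rewrite ltn_mod; lia.
case: (ltnP x K) => hx; case: (ltnP y K) => hy //.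
- by apply/idP; have := hm _ hx; lia.
- by apply/negbTE; have := hm _ hy; lia.
Qed.

Definition prof n h K (s : nat -> nat) : profile n h := fun i => @rot n K (s (val i)).

Definition cnt h K (s : nat -> nat) x y := count (fun j => aboveN K (s j) x y) (iota 0 h).

Lemma nvotes_prof n h K s (x y : 'I_n) : K <= n ->
  nvotes (@prof n h K s) x y = cnt h K s x y.
Proof.
move=> hK; rewrite /nvotes /cnt -card_val; apply: eq_card => i.
by rewrite !inE /prof above_rot.
Qed.

Lemma maj_prof n h K s (x y : 'I_n) : K <= n ->
  maj (@prof n h K s) x y = (mu0 h <= cnt h K s x y).
Proof. by move=> hK; rewrite /maj nvotes_prof. Qed.

Lemma cardW n h K s (x : 'I_n) : K <= n ->
  #|[set y | maj (@prof n h K s) x y]| = count (fun yv => mu0 h <= cnt h K s x yv) (iota 0 n).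
Proof.
move=> hK; rewrite -card_val; apply: eq_card => y; by rewrite !inE maj_prof.
Qed.

Lemma cardL n h K s (x : 'I_n) : K <= n ->
  #|[set y | maj (@prof n h K s) y x]| = count (fun yv => mu0 h <= cnt h K s yv x) (iota 0 n).
Proof.
move=> hK; rewrite -card_val; apply: eq_card => y; by rewrite !inE maj_prof.
Qed.

Lemma count_const (b : bool) (l : seq nat) : count (fun _ => b) l = b * size l.
Proof. case: b; [by rewrite count_predT mul1n | by rewrite count_pred0]. Qed.

Lemma count_iota_split (P : pred nat) a b c :
  count P (iota a (b + c)) = count P (iota a b) + count P (iota (a + b) c).
Proof. by rewrite iotaD count_cat. Qed.

Lemma count_on (P : pred nat) (b : bool) a l :
  (forall j, a <= j < a + l -> P j = b) -> count P (iota a l) = b * l.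
Proof.
move=> H; rewrite -{2}(size_iota a l) -count_const.
by apply: eq_in_count => j; rewrite mem_iota => /H.
Qed.

Lemma cnt_tb h K s x y : x < K -> K <= y -> cnt h K s x y = h.
Proof.
move=> hx hy; rewrite /cnt.
transitivity (count predT (iota 0 h)); last by rewrite count_predT size_iota.
apply: eq_count => j /=; rewrite /aboveN hx; by have -> : (y < K) = false by lia.
Qed.

Lemma cnt_bt h K s x y : K <= x -> y < K -> cnt h K s x y = 0.
Proof.
move=> hx hy; rewrite /cnt.
transitivity (count pred0 (iota 0 h)); last by rewrite count_pred0.
apply: eq_count => j /=; rewrite /aboveN hy; by have -> : (x < K) = false by lia.
Qed.

Lemma mu0_pos h : 0 < mu0 h.
Proof. by rewrite /mu0. Qed.

Lemma mu0_le h : 2 <= h -> mu0 h <= h.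
Proof. move=> hh; rewrite /mu0 -divn2; lia. Qed.

Lemma countW_bot h K s x m : 2 <= h -> x < K ->
  count (fun yv => mu0 h <= cnt h K s x yv) (iota K m) = m.
Proof.
move=> hh hx; rewrite (@count_on _ true) ?mul1n // => j hj.
by rewrite cnt_tb ?mu0_le //; lia.
Qed.

Lemma countL_bot h K s x m : x < K ->
  count (fun yv => mu0 h <= cnt h K s yv x) (iota K m) = 0.
Proof.
move=> hx; rewrite (@count_on _ false) // => j hj.
rewrite cnt_bt //. lia.
Qed.

Lemma ms_ub n h (p : profile n h) x B :
  (forall y : 'I_n, y != x -> nvotes p y x <= B) -> minimax_score p x <= B.
Proof. by move=> H; apply/bigmax_leqP. Qed.

Lemma ms_lb n h (p : profile n h) x y :
  y != x -> nvotes p y x <= minimax_score p x.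
Proof. by move=> H; apply: (@leq_bigmax_cond _ _ (fun y => nvotes p y x)). Qed.

Lemma iota_split K m : iota 0 (m + K) = iota 0 K ++ iota K m.
Proof. by rewrite addnC iotaD. Qed.

Definition sE k j := if j < k then 0 else 2.

Lemma cntE k x y : cnt (k + k) 3 (sE k) x y = aboveN 3 0 x y * k + aboveN 3 2 x y * k.
Proof.
rewrite /cnt count_iota_split (@count_on _ (aboveN 3 0 x y)); last first.
  by move=> j hj; rewrite /sE; have -> : j < k by lia.
rewrite (@count_on _ (aboveN 3 2 x y)) // => j hj.
by rewrite /sE; have -> : (j < k) = false by lia.
Qed.

Lemma mu0E k : mu0 (k + k) = k.+1.
Proof. rewrite /mu0 -divn2; lia. Qed.

Lemma ceE m k : 1 <= k -> Minimax (@prof (m+3) (k+k) 3 (sE k)) != Copeland (@prof (m+3) (k+k) 3 (sE k)).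
Proof.
move=> hk; set p := @prof _ _ _ _.
have hK : 3 <= m + 3 by lia.
pose o0 : 'I_(m+3) := @Ordinal _ 0 (ltn_addl _ (isT : 0 < 3)).
pose o1 : 'I_(m+3) := @Ordinal _ 1 (ltn_addl _ (isT : 1 < 3)).
apply/negP => /eqP E.
have hM : o0 \in Minimax p.
  rewrite inE; apply/forallP => z.
  have ub : minimax_score p o0 <= k.
    apply: ms_ub => y hy; rewrite nvotes_prof // cntE.
    case: y hy => [[|[|[|yv]]] hyv] hy //=; rewrite /aboveN /=; lia.
  case: (eqVneq z o0) => [-> //|hz].
  have hz' : o0 != z by rewrite eq_sym.
  apply: (leq_trans ub); apply: (leq_trans _ (@ms_lb _ _ p z o0 hz')).
  rewrite nvotes_prof // cntE.
  clear hz'; case: z hz => [[|[|[|yv]]] hyv] hy //=; rewrite /aboveN /=; lia.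
move: hM; rewrite E inE => /forallP /(_ o1).
rewrite /copeland_score !cardW ?cardL // !iota_split !count_cat.
have hh : 2 <= k + k by lia.
rewrite !countW_bot // !countL_bot // mu0E /= !cntE /aboveN /=.
lia.
Qed.

Definition sO k j := if j < k then 0 else if j < k + k then 2 else 1.

Lemma cntO k x y : cnt (k + k + 1) 3 (sO k) x y =
  aboveN 3 0 x y * k + aboveN 3 2 x y * k + aboveN 3 1 x y * 1.
Proof.
rewrite /cnt !count_iota_split (@count_on _ (aboveN 3 0 x y)); last first.
  by move=> j hj; rewrite /sO; have -> : j < k by lia.
rewrite (@count_on _ (aboveN 3 2 x y)); last first.
  move=> j hj; rewrite /sO. have -> : (j < k) = false by lia. have -> : j < k + k by lia. by [].
rewrite (@count_on _ (aboveN 3 1 x y)) // => j hj.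
rewrite /sO. have -> : (j < k) = false by lia. have -> : (j < k + k) = false by lia. by [].
Qed.

Lemma mu0O k : mu0 (k + k + 1) = k.+1.
Proof. rewrite /mu0 -divn2; lia. Qed.

Lemma ceO m k : 2 <= k -> Minimax (@prof (m+3) (k+k+1) 3 (sO k)) != Copeland (@prof (m+3) (k+k+1) 3 (sO k)).
Proof.
move=> hk; set p := @prof _ _ _ _.
have hK : 3 <= m + 3 by lia.
have hh : 2 <= k + k + 1 by lia.
pose o0 : 'I_(m+3) := @Ordinal _ 0 (ltn_addl _ (isT : 0 < 3)).
pose o1 : 'I_(m+3) := @Ordinal _ 1 (ltn_addl _ (isT : 1 < 3)).
pose o2 : 'I_(m+3) := @Ordinal _ 2 (ltn_addl _ (isT : 2 < 3)).
apply/negP => /eqP E.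
have hC : o2 \in Copeland p.
  rewrite inE; apply/forallP => z.
  rewrite /copeland_score !cardW ?cardL // !iota_split !count_cat.
  idtac.
  case: z => [[|[|[|zv]]] hzv].
  - rewrite !countW_bot // !countL_bot // mu0O /= !cntO /aboveN /=. lia.
  - rewrite !countW_bot // !countL_bot // mu0O /= !cntO /aboveN /=. lia.
  - by rewrite !countW_bot // !countL_bot //.
  - have W2 : count (fun yv => mu0 (k+k+1) <= cnt (k+k+1) 3 (sO k) o2 yv) (iota 3 m) = m.
      exact: countW_bot.
    have L2 : count (fun yv => mu0 (k+k+1) <= cnt (k+k+1) 3 (sO k) yv o2) (iota 3 m) = 0.
      exact: countL_bot.
    rewrite W2 L2 mu0O /= !cntO /aboveN /=.
    have : count (fun yv => k.+1 <= cnt (k + k + 1) 3 (sO k) zv.+3 yv) (iota 3 m) <= m.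
      by rewrite -[X in _ <= X](size_iota 3 m) count_size.
    lia.
move: hC; rewrite -E inE => /forallP /(_ o0).
have ub : minimax_score p o0 <= k.+1.
  apply: ms_ub => y hy; rewrite nvotes_prof // cntO.
  case: y hy => [[|[|[|yv]]] hyv] hy //=; rewrite /aboveN /=; lia.
have lb : k + k <= minimax_score p o2.
  apply: (leq_trans _ (@ms_lb _ _ p o2 o1 isT)).
  rewrite nvotes_prof // cntO /aboveN /=; lia.
lia.
Qed.

Definition sT j := if j == 0 then 0 else if j == 1 then 3 else 2.

Lemma ceT m : Minimax (@prof (m+4) 3 4 sT) != Copeland (@prof (m+4) 3 4 sT).
Proof.
set p := @prof _ _ _ _.
have hK : 4 <= m + 4 by lia.
have hh : 2 <= 3 by [].
pose o0 : 'I_(m+4) := @Ordinal _ 0 (ltn_addl _ (isT : 0 < 4)).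
pose o1 : 'I_(m+4) := @Ordinal _ 1 (ltn_addl _ (isT : 1 < 4)).
apply/negP => /eqP E.
have hM : o0 \in Minimax p.
  rewrite inE; apply/forallP => z.
  have ub : minimax_score p o0 <= 2.
    apply: ms_ub => y hy; rewrite nvotes_prof //.
    case: y hy => [[|[|[|[|yv]]]] hyv] hy //=.
  case: (eqVneq z o0) => [-> //|hz].
  apply: (leq_trans ub).
  case: z hz => [[|[|[|[|zv]]]] hzv] hz //.
  - by apply: (leq_trans _ (@ms_lb _ _ p (Ordinal hzv) o0 isT)); rewrite nvotes_prof.
  - by apply: (leq_trans _ (@ms_lb _ _ p (Ordinal hzv) o1 isT)); rewrite nvotes_prof.
  - by apply: (leq_trans _ (@ms_lb _ _ p (Ordinal hzv) (@Ordinal _ 2 (ltn_addl _ (isT : 2 < 4))) isT)); rewrite nvotes_prof.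
  - by apply: (leq_trans _ (@ms_lb _ _ p (Ordinal hzv) o0 isT)); rewrite nvotes_prof.
move: hM; rewrite E inE => /forallP /(_ o1).
rewrite /copeland_score !cardW ?cardL // !iota_split !count_cat.
rewrite !countW_bot // !countL_bot //=.
lia.
Qed.

Lemma nv_self n h (p : profile n h) x : nvotes p x x = 0.
Proof.
rewrite /nvotes -(cards0 'I_h); apply: eq_card => i; by rewrite !inE /above ltnn.
Qed.

Lemma nv_sum n h (p : profile n h) x y : x != y -> nvotes p x y + nvotes p y x = h.
Proof.
move=> hxy; rewrite /nvotes.
have -> : [set i | above (p i) y x] = ~: [set i | above (p i) x y].
  apply/setP => i; rewrite !inE /above.
  have : p i x != p i y by rewrite (inj_eq perm_inj).
  rewrite neq_ltn; case/orP => h1.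
  - by rewrite h1 ltnNge ltnW.
  - by rewrite h1 ltnNge ltnW.
by rewrite cardsC card_ord.
Qed.

Lemma card_sum n (P : pred 'I_n) : #|[set y | P y]| = \sum_(y < n) P y.
Proof.
rewrite -sum1_card big_mkcond /=; apply: eq_bigr => i _; rewrite inE; by case: (P i).
Qed.

Definition t0 : 'I_2 := @Ordinal 2 0 isT.
Definition t1 : 'I_2 := @Ordinal 2 1 isT.

Lemma cases2 (x : 'I_2) : x = t0 \/ x = t1.
Proof. case: x => [[|[|?]] hx]; [left|right|by []]; exact: val_inj. Qed.

Lemma all2 (P : pred 'I_2) : [forall z, P z] = P t0 && P t1.
Proof.
apply/forallP/andP => [H|[H0 H1] z]; first by split; apply: H.
by case: (cases2 z) => ->.
Qed.

Lemma card2 (P : pred 'I_2) : #|[set y | P y]| = P t0 + P t1.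
Proof.
rewrite card_sum big_ord_recl big_ord_recl big_ord0 addn0.
have -> : (lift ord0 ord0 : 'I_2) = t1 by apply: val_inj.
by have -> : (ord0 : 'I_2) = t0 by apply: val_inj.
Qed.

Lemma ms_eq n h (p : profile n h) x v :
  (forall y, y != x -> nvotes p y x <= v) -> (exists2 y, y != x & v <= nvotes p y x) ->
  minimax_score p x = v.
Proof.
move=> H [y hy hv]; apply/eqP; rewrite eqn_leq; apply/andP; split.
  exact: ms_ub.
exact: (leq_trans hv (ms_lb p hy)).
Qed.

Lemma if2 h (p : profile 2 h) : Minimax p = Copeland p.
Proof.
have s01 := @nv_sum _ _ p t0 t1 isT.
have m0 : minimax_score p t0 = nvotes p t1 t0.
  apply: ms_eq; last by exists t1.
  by move=> y; case: (cases2 y) => -> // _.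
have m1 : minimax_score p t1 = nvotes p t0 t1.
  apply: ms_eq; last by exists t0.
  by move=> y; case: (cases2 y) => -> // _.
have hm : mu0 h = h %/ 2 + 1 by rewrite /mu0 -divn2; lia.
apply/setP => x; case: (cases2 x) => ->;
rewrite !inE !all2 /copeland_score /maj !card2 !nv_self m0 m1 hm;
move: (nvotes p t0 t1) (nvotes p t1 t0) s01 => a b s01;
case: (leqP (h %/ 2 + 1) a) => h1; case: (leqP (h %/ 2 + 1) b) => h2 /=; apply/idP/idP; lia.
Qed.

Definition u0 : 'I_3 := @Ordinal 3 0 isT.
Definition u1 : 'I_3 := @Ordinal 3 1 isT.
Definition u2 : 'I_3 := @Ordinal 3 2 isT.

Lemma cases3 (x : 'I_3) : [\/ x = u0, x = u1 | x = u2].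
Proof.
case: x => [[|[|[|?]]] hx]; [apply: Or31|apply: Or32|apply: Or33|by []]; exact: val_inj.
Qed.

Lemma all3 (P : pred 'I_3) : [forall z, P z] = [&& P u0, P u1 & P u2].
Proof.
apply/forallP/and3P => [H|[H0 H1 H2] z]; first by split; apply: H.
by case: (cases3 z) => ->.
Qed.

Lemma card3 (P : pred 'I_3) : #|[set y | P y]| = P u0 + P u1 + P u2.
Proof.
rewrite card_sum !big_ord_recl big_ord0 addn0 addnA.
have -> : (lift ord0 (lift ord0 ord0) : 'I_3) = u2 by apply: val_inj.
have -> : (lift ord0 ord0 : 'I_3) = u1 by apply: val_inj.
by have -> : (ord0 : 'I_3) = u0 by apply: val_inj.
Qed.

Lemma trans_lb n h (p : profile n h) x y z :
  nvotes p x y + nvotes p y z <= h + nvotes p x z.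
Proof.
rewrite /nvotes -cardsUI.
apply: leq_add; first by apply: (leq_trans (max_card _)); rewrite card_ord.
apply: subset_leq_card; apply/subsetP => i; rewrite !inE /above => /andP[h1 h2].
exact: ltn_trans h1 h2.
Qed.

Lemma ms3 n h (p : profile n h) x y z :
  (forall w, w != x -> w = y \/ w = z) -> y != x -> z != x ->
  minimax_score p x = maxn (nvotes p y x) (nvotes p z x).
Proof.
move=> H hy hz; apply: ms_eq.
  move=> w /H [] ->; by rewrite leq_max leqnn ?orbT.
case: (leqP (nvotes p y x) (nvotes p z x)) => hl.
  by exists z; rewrite // (maxn_idPr hl).
by exists y; rewrite // (maxn_idPl (ltnW hl)).
Qed.
Lemma if33 (p : profile 3 3) : Minimax p = Copeland p.
Proof.
have s01 := @nv_sum _ _ p u0 u1 isT.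
have s02 := @nv_sum _ _ p u0 u2 isT.
have s12 := @nv_sum _ _ p u1 u2 isT.
have t012 := trans_lb p u0 u1 u2. have t021 := trans_lb p u0 u2 u1.
have t102 := trans_lb p u1 u0 u2. have t120 := trans_lb p u1 u2 u0.
have t201 := trans_lb p u2 u0 u1. have t210 := trans_lb p u2 u1 u0.
have m0 : minimax_score p u0 = maxn (nvotes p u1 u0) (nvotes p u2 u0).
  apply: ms3 => // w; case: (cases3 w) => -> // _; [left|right] => //.
have m1 : minimax_score p u1 = maxn (nvotes p u0 u1) (nvotes p u2 u1).
  apply: ms3 => // w; case: (cases3 w) => -> // _; [left|right] => //.
have m2 : minimax_score p u2 = maxn (nvotes p u0 u2) (nvotes p u1 u2).
  apply: ms3 => // w; case: (cases3 w) => -> // _; [left|right] => //.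
apply/setP => x; case: (cases3 x) => ->;
rewrite !inE !all3 /copeland_score /maj !card3 !nv_self m0 m1 m2 /=;
move: (nvotes p u0 u1) (nvotes p u1 u0) (nvotes p u0 u2) (nvotes p u2 u0)
  (nvotes p u1 u2) (nvotes p u2 u1) s01 s02 s12 t012 t021 t102 t120 t201 t210;
move=> a b c d e f s01 s02 s12.
all: have -> : b = 3 - a by lia.
all: have -> : d = 3 - c by lia.
all: have -> : f = 3 - e by lia.
all: have : a <= 3 by lia.
all: have : c <= 3 by lia.
all: have : e <= 3 by lia.
all: clear; case: e => [|[|[|[|e]]]] // _; case: c => [|[|[|[|c]]]] // _; case: a => [|[|[|[|a]]]] // _.
all: by [].
Qed.

Theorem corollary2 (n h : nat) (hn : 2 <= n) (hh : 2 <= h) :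
  (forall p : profile n h, Minimax p = Copeland p) <->
  (n = 2 \/ (h = 3 /\ n = 3)).
Proof.
split; last first.
  by case=> [->|[-> ->]]; [exact: if2 | exact: if33].
move=> H; case: (eqVneq n 2) => [->|hn2]; first by left.
case: (eqVneq h 3) => [eh|hh3].
  case: (eqVneq n 3) => [en|hn3]; first by right.
  exfalso; have [m em] : exists m, n = m + 4 by exists (n - 4); lia.
  subst n h; by move: (ceT m); rewrite H eqxx.
exfalso; have [m em] : exists m, n = m + 3 by exists (n - 3); lia.
subst n.
have hd := odd_double_half h; rewrite -addnn in hd.
case ho: (odd h) hd => /= hd.
  have [k ek] : exists k, h = k + k + 1 by exists h./2; lia.
  subst h; have hk : 2 <= k by lia.
  by move: (ceO m hk); rewrite H eqxx.
have [k ek] : exists k, h = k + k by exists h./2; lia.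
subst h; have hk : 1 <= k by lia.
by move: (ceE m hk); rewrite H eqxx.
Qed.
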